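(* Consider the $2\times2$ TAHO scheme defined in the context, with $a=F'(0)>0$ and $\lambda\ge\|F'\|_\infty$, and let $m_1=\min_uM_1'(u)>0$, $m_2=\min_uM_2'(u)>0$ (minima over the range of $u$ under consideration). Suppose $$\Delta t\le\min\Big(\frac{1-\lambda\rho}{1+\gamma_1},\frac{1-\lambda\rho}{1-\gamma_2}\Big),$$ and, if $\lambda>2a$, $$\Delta x\le\frac{a^2}{\lambda+a},\qquad \rho\le\min\Big(\frac1\lambda,\ \frac{2\lambda^2m_1}{2a^2\lambda m_1+a_+a_-^2},\ \frac{2\lambda^2m_2}{2a^2\lambda m_2+a_+^2a_-}\Big),$$ while if $a<\lambda<2a$, the same conditions together with $\rho\ge\frac{|\lambda-2a|}{a^2-\Delta x\,a_-}$. Then the scheme satisfies the monotonicity conditions: for $i=1,2$ and all $u$ in the range under consideration, $(\mathcal{B}^i_l)'(u)\ge0$ for $l=-1,0,1$; $1-\rho q+\Delta t\big((\mathcal{B}^i_0)'(u)-\beta^i_0\big)\ge0$; $\frac{\rho(\lambda_i+q)}{2}+\Delta t\big((\mathcal{B}^i_{-1})'(u)-\beta^i_{-1}\big)\ge0$; $\frac{\rho(q-\lambda_i)}{2}+\Delta t\big((\mathcal{B}^i_1)'(u)-\beta^i_1\big)\ge0$.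
   Context: Jin–Xin system: $\partial_tf^i+\lambda_i\partial_xf^i=M_i(u)-f^i$, $i=1,2$, scalar unknowns ($k=1$), $\lambda_1=-\lambda$, $\lambda_2=\lambda$, $\lambda>0$, $u=f^1+f^2$, with $F(u)=\lambda(M_2(u)-M_1(u))$ smooth, $F(0)=0$, $M_1+M_2=\mathrm{id}$; equivalently $u_t+v_x=0$, $v_t+\lambda^2u_x=F(u)-v$ with $v=\lambda(f^2-f^1)$. Set $a=F'(0)$, $a_\pm=\lambda\pm a$, $\rho=\Delta t/\Delta x$, $q=\lambda$. The $2\times2$ TAHO scheme is $$\frac{f^i_{j,n+1}-f^i_{j,n}}{\Delta t}+\frac{\lambda_i}{2\Delta x}(f^i_{j+1,n}-f^i_{j-1,n})-\frac{q}{2\Delta x}(f^i_{j+1,n}-2f^i_{j,n}+f^i_{j-1,n})=\sum_{l=-1,0,1}\big(\mathcal{B}^i_l(u_{j+l,n})-\beta^i_lf^i_{j+l,n}\big),$$ with scalar $\beta^i_l$ and functions $\mathcal{B}^i_l$ determined by: $\beta^i_{-1}+\beta^i_0+\beta^i_1=1-\frac{\rho}{2}\Delta x$; $\mathcal{B}^i_{-1}+\mathcal{B}^i_0+\mathcal{B}^i_1=M_i(u)(1-\frac{\rho}{2}\Delta x)$; $\beta^i_1-\beta^i_{-1}=\gamma_i$ and $\mathcal{B}^i_1-\mathcal{B}^i_{-1}=\Gamma_i$, where $\gamma_1=\frac{q}{2a_+}+\frac{a\rho}{2a_+}(2\lambda+a)$, $\gamma_2=-\frac{q}{2a_-}+\frac{a\rho}{2a_-}(2\lambda-a)$,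 $\Gamma_1(u)=\frac{q-a^2\rho}{2a_+}M_1(u)-\frac{a_-^2}{4\lambda}\rho u$, $\Gamma_2(u)=-\frac{q-a^2\rho}{2a_-}M_2(u)+\frac{a_+^2}{4\lambda}\rho u$; and finally $\beta^1_0=1-\gamma_1-\frac{\rho}{2}\Delta x$, $\beta^2_0=1+\gamma_2-\frac{\rho}{2}\Delta x$, and $\mathcal{B}^i_0$ is chosen with $(\mathcal{B}^i_0)'(u)=M_i'(u)-|\Gamma_i'(u)|-\frac{\rho}{2}\Delta x\,M_i'(u)$ for $i=1,2$. *)

(* Defs.v *)
From Stdlib Require Import Reals ZArith.
Open Scope R_scope.

(* Flux of the Jin--Xin relaxation: F(u) = lambda (M_2(u) - M_1(u)). *)
Definition Fflux (lam : R) (M1 M2 : R -> R) : R -> R :=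
  fun u => lam * (M2 u - M1 u).

(* a_+ = lambda + a, a_- = lambda - a ; q = lambda *)
Definition a_plus (lam a : R) : R := lam + a.
Definition a_minus (lam a : R) : R := lam - a.

(* The scalar M_i for i = 1, 2 (any other index is mapped to M_2). *)
Definition Mi (M1 M2 : R -> R) (i : nat) : R -> R :=
  if Nat.eqb i 1 then M1 else M2.

Definition lambda_i (lam : R) (i : nat) : R :=
  if Nat.eqb i 1 then - lam else lam.

(* gamma_i, with q = lambda and rho = dt/dx *)
Definition gamma_i (lam a rho : R) (i : nat) : R :=
  if Nat.eqb i 1 then
    lam / (2 * a_plus lam a) + a * rho / (2 * a_plus lam a) * (2 * lam + a)
  else
    - (lam / (2 * a_minus lam a)) + a * rho / (2 * a_minus lam a) * (2 * lam - a).

Definition Gamma_i (M1 M2 : R -> R) (lam a rho : R) (i : nat) : R -> R :=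
  if Nat.eqb i 1 then
    fun u => (lam - a ^ 2 * rho) / (2 * a_plus lam a) * M1 u
             - (a_minus lam a) ^ 2 / (4 * lam) * rho * u
  else
    fun u => - ((lam - a ^ 2 * rho) / (2 * a_minus lam a)) * M2 u
             + (a_plus lam a) ^ 2 / (4 * lam) * rho * u.

(* Main.v *)
Require Import Defs.
From Stdlib Require Import Reals ZArith Lra Psatz FunctionalExtensionality.
Open Scope R_scope.
Lemma absb (x : R) : x <= Rabs x /\ - x <= Rabs x.
Proof. split; [apply Rle_abs|]. rewrite <- Rabs_Ropp. apply Rle_abs. Qed.

Lemma core1 lam a dx r dt m1 d g1 c1 k1 dB1 dBm dB0 b1 bm b0 :
  0 < lam -> 0 < a -> a < lam -> 0 < dx -> 0 < r -> dt = r*dx -> r*lam <= 1 ->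
  dx*(lam+a) <= a^2 ->
  g1 * (2*(lam+a)) = lam + a*r*(2*lam+a) ->
  c1 * (2*(lam+a)) = lam - a^2*r -> k1*(4*lam) = (lam-a)^2*r ->
  dt*(1+g1) <= 1 - lam*r ->
  r*(2*a^2*lam*m1 + (lam+a)*(lam-a)^2) <= 2*lam^2*m1 ->
  0 < m1 -> m1 <= d ->
  dB1 - dBm = c1*d - k1 -> dBm + dB0 + dB1 = d*(1 - dt/2) ->
  dB0 = d - Rabs (c1*d-k1) - dt/2*d ->
  bm + b0 + b1 = 1 - dt/2 -> b1 - bm = g1 -> b0 = 1 - g1 - dt/2 ->
  0 <= dBm /\ 0 <= dB0 /\ 0 <= dB1 /\ 0 <= 1 - r*lam + dt*(dB0-b0) /\
  0 <= r*(-lam+lam)/2 + dt*(dBm - bm) /\ 0 <= r*(lam - - lam)/2 + dt*(dB1-b1).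
Proof.
  intros Hl Ha Hal Hdx Hr Hdt Hrl Hdxa Hg Hc Hk Hdtc Hrm Hm Hmd H1 H2 H3 H4 H5 H6.
  pose proof (absb (c1*d-k1)) as [A1 A2].
  assert (Hk0 : 0 <= k1).
  { assert (0 <= k1*(4*lam)) by (rewrite Hk; apply Rmult_le_pos; [apply pow2_ge_0|lra]). nra. }
  assert (Har0 : 0 <= a*r) by (apply Rmult_le_pos; lra).
  assert (Hg0 : 0 <= g1).
  { assert (0 <= g1*(2*(lam+a))) by (rewrite Hg; nra). nra. }
  assert (Ha2 : a^2 <= lam^2) by nra.
  assert (Har : a^2*r <= lam).
  { assert (a^2*(r*lam) <= a^2) by (apply Rmult_le_compat_r with (r:=a^2) in Hrl; nra).
    assert (a^2*r*lam <= lam*lam) by nra. nra. }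
  assert (Hc0 : 0 <= c1).
  { assert (0 <= c1*(2*(lam+a))) by (rewrite Hc; nra). nra. }
  assert (Hc1 : c1 <= 1/2).
  { assert (c1*(2*(lam+a)) <= (lam+a)) by (rewrite Hc; nra). nra. }
  assert (Hdt0 : 0 < dt) by (subst; nra).
  assert (Hdt1 : dt <= 1).
  { assert (dt * g1 >= 0) by nra. nra. }
  assert (Hmk : m1*c1 >= k1).
  { assert (P : 0 < 4*lam*(lam+a)) by nra.
    assert (4*lam*(lam+a)*(m1*c1 - k1) >= 0); [|nra].
    replace (4*lam*(lam+a)*(m1*c1 - k1)) with (2*lam*m1*(c1*(2*(lam+a))) - (lam+a)*(k1*(4*lam))) by ring.
    rewrite Hc, Hk. lra. }
  assert (Hd0 : 0 < d) by lra.
  assert (Habs : Rabs (c1*d-k1) <= d*(1-dt/2)).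
  { apply Rabs_le. split.
    - assert (d*(1 - dt/2 - c1) >= 0) by (apply Rle_ge, Rmult_le_pos; lra). nra.
    - assert (d*(1 - dt/2) >= 0) by (apply Rle_ge, Rmult_le_pos; lra).
      assert (d*c1 >= m1*c1) by nra. nra. }
  assert (Hbm : bm = 0) by lra.
  assert (Hb1 : b1 = g1) by lra.
  assert (HdB0 : 0 <= dB0) by lra.
  assert (HdBm : 0 <= dBm) by lra.
  assert (HdB1 : 0 <= dB1) by lra.
  assert (Hdg : dx*g1 <= lam).
  { assert (2*(lam+a)*(dx*g1) <= 2*(lam+a)*lam); [|nra].
    replace (2*(lam+a)*(dx*g1)) with (dx*(g1*(2*(lam+a)))) by ring. rewrite Hg.
    assert (0 <= a*(2*lam+a)*(dx*(1-r*lam))) by (repeat apply Rmult_le_pos; lra).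
    assert (dx*(lam+a)*(lam+a) <= a^2*(lam+a)) by (apply Rmult_le_compat_r; lra).
    assert (a^2*(lam+a) <= lam^2*(lam+a)) by (apply Rmult_le_compat_r; [lra|exact Ha2]).
    assert (0 <= lam^2*(lam+a)) by (apply Rmult_le_pos; [apply pow2_ge_0|lra]).
    assert (lam*(dx * (lam + a * r * (2 * lam + a))) <= lam*(2 * (lam + a) * lam)) by lra.
    nra. }
  assert (0 <= dt*dB0) by (apply Rmult_le_pos; lra).
  assert (0 <= dt*dB1) by (apply Rmult_le_pos; lra).
  assert (0 <= dt*dBm) by (apply Rmult_le_pos; lra).
  assert (0 <= dt*g1) by (apply Rmult_le_pos; lra).
  assert (0 <= dt*dt) by (apply Rmult_le_pos; lra).
  assert (0 <= r*(lam - dx*g1)) by (apply Rmult_le_pos; lra).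
  rewrite Hbm, Hb1, H6. subst dt.
  repeat split; lra.
Qed.
Lemma core2 lam a dx r dt m2 d g2 c2 k2 dB1 dBm dB0 b1 bm b0 :
  0 < lam -> 0 < a -> a < lam -> 0 < dx -> 0 < r -> dt = r*dx -> r*lam <= 1 ->
  dx*(lam+a) <= a^2 ->
  (2*a < lam \/ (lam < 2*a /\ 2*a - lam <= r*(a^2 - dx*(lam-a)))) ->
  g2 * (2*(lam-a)) = - lam + a*r*(2*lam-a) ->
  c2 * (2*(lam-a)) = lam - a^2*r -> k2*(4*lam) = (lam+a)^2*r ->
  dt*(1-g2) <= 1 - lam*r ->
  r*(2*a^2*lam*m2 + (lam+a)^2*(lam-a)) <= 2*lam^2*m2 ->
  0 < m2 -> m2 <= d -> d <= 1 ->
  dB1 - dBm = - c2*d + k2 -> dBm + dB0 + dB1 = d*(1 - dt/2) ->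
  dB0 = d - Rabs (- c2*d + k2) - dt/2*d ->
  bm + b0 + b1 = 1 - dt/2 -> b1 - bm = g2 -> b0 = 1 + g2 - dt/2 ->
  0 <= dBm /\ 0 <= dB0 /\ 0 <= dB1 /\ 0 <= 1 - r*lam + dt*(dB0-b0) /\
  0 <= r*(lam+lam)/2 + dt*(dBm - bm) /\ 0 <= r*(lam - lam)/2 + dt*(dB1-b1).
Proof.
  intros Hl Ha Hal Hdx Hr Hdt Hrl Hdxa Hcase Hg Hc Hk Hdtc Hrm Hm Hmd Hd1 H1 H2 H3 H4 H5 H6.
  pose proof (absb (- c2*d+k2)) as [A1 A2].
  assert (Hmu : 0 < lam - a) by lra.
  assert (Hk0 : 0 <= k2).
  { assert (0 <= k2*(4*lam)) by (rewrite Hk; apply Rmult_le_pos; [apply pow2_ge_0|lra]). nra. }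
  assert (Ha2 : a^2 <= lam^2) by nra.
  assert (Har : a^2*r <= lam).
  { assert (a^2*(r*lam) <= a^2) by (apply Rmult_le_compat_r with (r:=a^2) in Hrl; nra).
    assert (a^2*r*lam <= lam*lam) by nra. nra. }
  assert (Hc0 : 0 <= c2).
  { assert (0 <= c2*(2*(lam-a))) by (rewrite Hc; nra). nra. }
  assert (Hg0 : g2 <= 0).
  { assert (Hq : a*(2*lam-a) <= lam^2) by nra.
    assert (0 <= a*(2*lam-a)) by (apply Rmult_le_pos; lra).
    assert (a*(2*lam-a)*(r*lam) <= a*(2*lam-a)) by (rewrite <- (Rmult_1_r (a*(2*lam-a))) at 2; apply Rmult_le_compat_l; lra).
    assert (a*r*(2*lam-a)*lam <= lam*lam) by lra.
    assert (a*r*(2*lam-a) <= lam) by nra.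
    assert (g2*(2*(lam-a)) <= 0) by lra. nra. }
  assert (Hdt0 : 0 < dt) by (subst; nra).
  assert (Hdt1 : dt <= 1).
  { assert (dt * g2 <= 0) by nra. nra. }
  assert (Hmk : m2*c2 >= k2).
  { assert (P : 0 < 4*lam*(lam-a)) by nra.
    assert (4*lam*(lam-a)*(m2*c2 - k2) >= 0); [|nra].
    replace (4*lam*(lam-a)*(m2*c2 - k2)) with (2*lam*m2*(c2*(2*(lam-a))) - (lam-a)*(k2*(4*lam))) by ring.
    rewrite Hc, Hk. lra. }
  assert (HF : 0 <= 1 - dt/2 - c2 + k2).
  { assert (P : 0 < 4*lam*(lam-a)) by nra.
    assert (0 <= 4*lam*(lam-a)*(1 - dt/2 - c2 + k2)); [|nra].
    replace (4*lam*(lam-a)*(1 - dt/2 - c2 + k2)) with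
      (4*lam*(lam-a) - 2*lam*(lam-a)*dt - 2*lam*(c2*(2*(lam-a))) + (lam-a)*(k2*(4*lam))) by (field).
    rewrite Hc, Hk, Hdt.
    replace (4 * lam * (lam - a) - 2 * lam * (lam - a) * (r * dx) - 2 * lam * (lam - a ^ 2 * r) +
      (lam - a) * ((lam + a) ^ 2 * r)) with
      (2*lam*(lam-2*a) + 2*lam*(r*(a^2 - dx*(lam-a))) + r*((lam+a)^2*(lam-a))) by ring.
    assert (0 <= r*((lam+a)^2*(lam-a))) by (apply Rmult_le_pos; [lra|apply Rmult_le_pos; [apply pow2_ge_0|lra]]).
    destruct Hcase as [Hc1|[Hc1 Hc2]].
    - assert ((lam-a)*dx <= a^2) by nra.
      assert (0 <= r*(a^2 - dx*(lam-a))) by (apply Rmult_le_pos; lra). nra.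
    - nra. }
  assert (Habs : Rabs (-c2*d+k2) <= d*(1-dt/2)).
  { apply Rabs_le. split.
    - assert (0 <= d*(1 - dt/2 - c2 + k2)) by (apply Rmult_le_pos; lra).
      assert (0 <= (1-d)*k2) by (apply Rmult_le_pos; lra). nra.
    - assert (d*(1 - dt/2) >= 0) by (apply Rle_ge, Rmult_le_pos; lra).
      assert (d*c2 >= m2*c2) by nra. nra. }
  assert (Hbm : bm = - g2) by lra.
  assert (Hb1 : b1 = 0) by lra.
  assert (HdB0 : 0 <= dB0) by lra.
  assert (HdBm : 0 <= dBm) by lra.
  assert (HdB1 : 0 <= dB1) by lra.
  assert (Hdxa' : dx < a).
  { assert (dx*(lam+a) < a*(lam+a)) by nra. nra. }
  assert (Hdg : 0 <= lam + dx*g2).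
  { assert (0 <= 2*(lam-a)*(lam + dx*g2)); [|nra].
    replace (2*(lam-a)*(lam + dx*g2)) with (2*lam*(lam-a) + dx*(g2*(2*(lam-a)))) by ring.
    rewrite Hg.
    assert (0 <= a*(2*lam-a)*dx*r) by (repeat apply Rmult_le_pos; lra).
    destruct Hcase as [Hc1|[Hc1 Hc2]].
    - assert (0 <= lam*(2*(lam-a) - dx)) by (apply Rmult_le_pos; lra). nra.
    - set (D := a^2 - dx*(lam-a)) in *.
      assert (HD : 0 < D) by (unfold D; nra).
      set (T := 2 * lam * (lam - a) + dx * (- lam + a * r * (2 * lam - a))).
      assert (0 <= T*D); [|nra].
      assert (E1 : T*D = (2*lam*(lam-a) - dx*lam)*D + a*(2*lam-a)*dx*(r*D)) by (unfold T; ring).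
      assert (0 <= a*(2*lam-a)*dx) by (repeat apply Rmult_le_pos; lra).
      assert (a*(2*lam-a)*dx*(2*a-lam) <= a*(2*lam-a)*dx*(r*D)) by (apply Rmult_le_compat_l; lra).
      assert (0 <= (2*lam*(lam-a) - dx*lam)*D + a*(2*lam-a)*dx*(2*a-lam)); [|lra].
      destruct (Rle_lt_dec dx (2*(lam-a))) as [Hs|Hs].
      + assert (0 <= (2*lam*(lam-a) - dx*lam)*D) by (apply Rmult_le_pos; nra).
        assert (0 <= a*(2*lam-a)*dx*(2*a-lam)) by (apply Rmult_le_pos; lra). lra.
      + assert ((2*lam*(lam-a) - dx*lam)*a^2 <= (2*lam*(lam-a) - dx*lam)*D).
        { unfold D. assert (0 <= (dx*lam - 2*lam*(lam-a))*(dx*(lam-a))) by (apply Rmult_le_pos; nra). nra. }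
        assert (E2 : (2*lam*(lam-a) - dx*lam)*a^2 + a*(2*lam-a)*dx*(2*a-lam) = 2*a*(lam-a)*(lam*a - dx*(lam-a))) by ring.
        assert (0 <= lam*a - dx*(lam-a)) by nra.
        assert (0 <= 2*a*(lam-a)*(lam*a - dx*(lam-a))) by (repeat apply Rmult_le_pos; lra).
        lra. }
  assert (0 <= dt*dB0) by (apply Rmult_le_pos; lra).
  assert (0 <= dt*dB1) by (apply Rmult_le_pos; lra).
  assert (0 <= dt*dBm) by (apply Rmult_le_pos; lra).
  assert (0 <= - dt*g2) by nra.
  assert (0 <= dt*dt) by (apply Rmult_le_pos; lra).
  assert (0 <= r*(lam + dx*g2)) by (apply Rmult_le_pos; lra).
  rewrite Hbm, Hb1, H6. subst dt.
  repeat split; lra.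
Qed.
Lemma dB_rel (f1 fm f0 G M : R -> R) (d1 dm d0 dG dM c u : R) :
  derivable_pt_lim f1 u d1 -> derivable_pt_lim fm u dm -> derivable_pt_lim f0 u d0 ->
  derivable_pt_lim G u dG -> derivable_pt_lim M u dM ->
  (forall u, f1 u - fm u = G u) -> (forall u, fm u + f0 u + f1 u = M u * c) ->
  d1 - dm = dG /\ dm + d0 + d1 = dM * c.
Proof.
  intros D1 Dm D0 DG DM E1 E2. split.
  - apply (uniqueness_limite G u); [|exact DG].
    replace G with (f1 - fm)%F; [apply derivable_pt_lim_minus; auto|].
    apply functional_extensionality; intro x; apply E1.
  - rewrite Rmult_comm.
    apply (uniqueness_limite (mult_real_fct c M) u); [|apply derivable_pt_lim_scal; exact DM].
    replace (mult_real_fct c M) with (fm + f0 + f1)%F;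
      [apply derivable_pt_lim_plus; [apply derivable_pt_lim_plus|]; auto|].
    apply functional_extensionality; intro x. unfold mult_real_fct, plus_fct.
    rewrite E2; ring.
Qed.

Lemma div_le (x n d : R) : 0 < d -> x <= n / d -> x * d <= n.
Proof.
  intros Hd H. apply Rmult_le_compat_r with (r := d) in H; [|lra].
  replace (n / d * d) with n in H by (field; lra). exact H.
Qed.
Theorem proposition4p1
  (lam dt dx : R) (M1 M2 dM1 dM2 : R -> R) (a : R)
  (U : R -> Prop) (m1 m2 : R)
  (B : nat -> Z -> R -> R) (dB : nat -> Z -> R -> R) (beta : nat -> Z -> R)
  (dGamma : nat -> R -> R)
  (* parameters *)
  (Hlam : 0 < lam) (Hdt : 0 < dt) (Hdx : 0 < dx)
  (* the Maxwellians: smooth (here: differentiable), M1 + M2 = id, F(0) = 0 *)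
  (HdM1 : forall u, derivable_pt_lim M1 u (dM1 u))
  (HdM2 : forall u, derivable_pt_lim M2 u (dM2 u))
  (Hsum : forall u, M1 u + M2 u = u)
  (HF0 : Fflux lam M1 M2 0 = 0)
  (* a = F'(0) > 0 *)
  (Ha : derivable_pt_lim (Fflux lam M1 M2) 0 a) (Hapos : 0 < a)
  (* lambda >= || F' ||_infty *)
  (HFinf : forall u l, derivable_pt_lim (Fflux lam M1 M2) u l -> Rabs l <= lam)
  (* m_i = min_{u in U} M_i'(u) > 0 *)
  (Hm1min : (exists u, U u /\ dM1 u = m1) /\ (forall u, U u -> m1 <= dM1 u))
  (Hm2min : (exists u, U u /\ dM2 u = m2) /\ (forall u, U u -> m2 <= dM2 u))
  (Hm1 : 0 < m1) (Hm2 : 0 < m2)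
  (* the TAHO coefficients, i in {1,2}, l in {-1,0,1} *)
  (HB : forall i l u, (i = 1%nat \/ i = 2%nat) -> (l = (-1)%Z \/ l = 0%Z \/ l = 1%Z) ->
          derivable_pt_lim (B i l) u (dB i l u))
  (HdGamma : forall i u, (i = 1%nat \/ i = 2%nat) ->
          derivable_pt_lim (Gamma_i M1 M2 lam a (dt / dx) i) u (dGamma i u))
  (Hbeta_sum : forall i, (i = 1%nat \/ i = 2%nat) ->
          beta i (-1)%Z + beta i 0%Z + beta i 1%Z = 1 - (dt / dx) / 2 * dx)
  (HB_sum : forall i u, (i = 1%nat \/ i = 2%nat) ->
          B i (-1)%Z u + B i 0%Z u + B i 1%Z u = Mi M1 M2 i u * (1 - (dt / dx) / 2 * dx))
  (Hbeta_diff : forall i, (i = 1%nat \/ i = 2%nat) ->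
          beta i 1%Z - beta i (-1)%Z = gamma_i lam a (dt / dx) i)
  (HB_diff : forall i u, (i = 1%nat \/ i = 2%nat) ->
          B i 1%Z u - B i (-1)%Z u = Gamma_i M1 M2 lam a (dt / dx) i u)
  (Hbeta10 : beta 1%nat 0%Z = 1 - gamma_i lam a (dt / dx) 1 - (dt / dx) / 2 * dx)
  (Hbeta20 : beta 2%nat 0%Z = 1 + gamma_i lam a (dt / dx) 2 - (dt / dx) / 2 * dx)
  (HB0 : forall i u, (i = 1%nat \/ i = 2%nat) ->
          dB i 0%Z u = (if Nat.eqb i 1 then dM1 u else dM2 u)
                       - Rabs (dGamma i u)
                       - (dt / dx) / 2 * dx * (if Nat.eqb i 1 then dM1 u else dM2 u))
  (* CFL-type conditions *)
  (Hdtc : dt <= Rmin ((1 - lam * (dt / dx)) / (1 + gamma_i lam a (dt / dx) 1))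
                     ((1 - lam * (dt / dx)) / (1 - gamma_i lam a (dt / dx) 2)))
  (Hdxc : dx <= a ^ 2 / (lam + a))
  (Hrhoc : dt / dx <= Rmin (1 / lam)
             (Rmin (2 * lam ^ 2 * m1 /
                      (2 * a ^ 2 * lam * m1 + a_plus lam a * (a_minus lam a) ^ 2))
                   (2 * lam ^ 2 * m2 /
                      (2 * a ^ 2 * lam * m2 + (a_plus lam a) ^ 2 * a_minus lam a))))
  (Hcase : 2 * a < lam \/
           (a < lam < 2 * a /\
            Rabs (lam - 2 * a) / (a ^ 2 - dx * a_minus lam a) <= dt / dx)) :
  forall i u, (i = 1%nat \/ i = 2%nat) -> U u ->
    (forall l, (l = (-1)%Z \/ l = 0%Z \/ l = 1%Z) -> 0 <= dB i l u) /\
    0 <= 1 - (dt / dx) * lam + dt * (dB i 0%Z u - beta i 0%Z) /\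
    0 <= (dt / dx) * (lambda_i lam i + lam) / 2 + dt * (dB i (-1)%Z u - beta i (-1)%Z) /\
    0 <= (dt / dx) * (lam - lambda_i lam i) / 2 + dt * (dB i 1%Z u - beta i 1%Z).
Proof.
Proof.
  intros i u Hi HU.
  set (r := dt / dx) in *.
  assert (Hr : 0 < r) by (unfold r; apply Rdiv_lt_0_compat; lra).
  assert (Hdtr : dt = r*dx) by (unfold r; field; lra).
  assert (Hh : r/2*dx = dt/2) by (rewrite Hdtr; field).
  rewrite Hh in *.
  assert (Hal : a <= lam).
  { pose proof (HFinf 0 a Ha). pose proof (Rle_abs a). lra. }
  assert (Hal' : a < lam) by (destruct Hcase as [?|[[? ?] ?]]; lra).
  assert (Hdsum : forall u, dM1 u + dM2 u = 1).
  { intro v. apply (uniqueness_limite id v); [|apply derivable_pt_lim_id].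
    replace id with (M1 + M2)%F; [apply derivable_pt_lim_plus; auto|].
    apply functional_extensionality; intro x; apply Hsum. }
  assert (HdF : forall v, derivable_pt_lim (Fflux lam M1 M2) v (lam * (dM2 v - dM1 v))).
  { intro v. exact (derivable_pt_lim_scal _ lam v _ (derivable_pt_lim_minus _ _ v _ _ (HdM2 v) (HdM1 v))). }
  assert (HdM2le : dM2 u <= 1).
  { pose proof (HFinf u _ (HdF u)). pose proof (Rle_abs (lam * (dM2 u - dM1 u))).
    pose proof (Hdsum u). nra. }
  assert (Hm1u : m1 <= dM1 u) by (apply (proj2 Hm1min); exact HU).
  assert (Hm2u : m2 <= dM2 u) by (apply (proj2 Hm2min); exact HU).
  pose proof (Rmin_l (1/lam) (Rmin (2 * lam ^ 2 * m1 /
                      (2 * a ^ 2 * lam * m1 + a_plus lam a * (a_minus lam a) ^ 2))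
                   (2 * lam ^ 2 * m2 /
                      (2 * a ^ 2 * lam * m2 + (a_plus lam a) ^ 2 * a_minus lam a)))) as R1.
  pose proof (Rmin_r (1/lam) (Rmin (2 * lam ^ 2 * m1 /
                      (2 * a ^ 2 * lam * m1 + a_plus lam a * (a_minus lam a) ^ 2))
                   (2 * lam ^ 2 * m2 /
                      (2 * a ^ 2 * lam * m2 + (a_plus lam a) ^ 2 * a_minus lam a)))) as R2.
  pose proof (Rmin_l (2 * lam ^ 2 * m1 /
                      (2 * a ^ 2 * lam * m1 + a_plus lam a * (a_minus lam a) ^ 2))
                   (2 * lam ^ 2 * m2 /
                      (2 * a ^ 2 * lam * m2 + (a_plus lam a) ^ 2 * a_minus lam a))) as R3.
  pose proof (Rmin_r (2 * lam ^ 2 * m1 /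
                      (2 * a ^ 2 * lam * m1 + a_plus lam a * (a_minus lam a) ^ 2))
                   (2 * lam ^ 2 * m2 /
                      (2 * a ^ 2 * lam * m2 + (a_plus lam a) ^ 2 * a_minus lam a))) as R4.
  unfold a_plus, a_minus in *.
  assert (Hp1 : 0 < (lam + a) * (lam - a) ^ 2) by (apply Rmult_lt_0_compat; [lra|apply pow_lt; lra]).
  assert (Hp2 : 0 < (lam + a) ^ 2 * (lam - a)) by (apply Rmult_lt_0_compat; [apply pow_lt; lra|lra]).
  assert (Hp0 : 0 < a^2*lam) by (apply Rmult_lt_0_compat; [apply pow_lt|]; lra).
  assert (Hrl : r * lam <= 1).
  { apply (div_le r 1 lam); [lra|]. lra. }
  assert (Hrm1 : r*(2*a^2*lam*m1 + (lam+a)*(lam-a)^2) <= 2*lam^2*m1).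
  { apply div_le; [nra|]. lra. }
  assert (Hrm2 : r*(2*a^2*lam*m2 + (lam+a)^2*(lam-a)) <= 2*lam^2*m2).
  { apply div_le; [nra|]. lra. }
  assert (Hdtc1 : dt*(1 + gamma_i lam a r 1) <= 1 - lam*r).
  { apply div_le.
    - unfold gamma_i, a_plus; cbn [Nat.eqb].
      assert (0 <= a*r) by (apply Rmult_le_pos; lra).
      assert (0 <= lam/(2*(lam+a))) by (unfold Rdiv; apply Rmult_le_pos; [lra|left; apply Rinv_0_lt_compat; lra]).
      assert (0 <= a*r/(2*(lam+a))*(2*lam+a)) by (apply Rmult_le_pos; [unfold Rdiv; apply Rmult_le_pos; [lra|left; apply Rinv_0_lt_compat; lra]|lra]).
      lra.
    - eapply Rle_trans; [exact Hdtc|apply Rmin_l]. }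
  assert (G1 : gamma_i lam a r 1 * (2*(lam+a)) = lam + a*r*(2*lam+a)).
  { unfold gamma_i, a_plus; cbn [Nat.eqb]. field. lra. }
  assert (G2 : gamma_i lam a r 2 * (2*(lam-a)) = - lam + a*r*(2*lam-a)).
  { unfold gamma_i, a_minus; cbn [Nat.eqb]. field. lra. }
  assert (Hg2 : gamma_i lam a r 2 <= 0).
  { assert (Hq : a*(2*lam-a) <= lam^2) by nra.
    assert (0 <= a*(2*lam-a)) by (apply Rmult_le_pos; lra).
    assert (a*(2*lam-a)*(r*lam) <= a*(2*lam-a)) by (rewrite <- (Rmult_1_r (a*(2*lam-a))) at 2; apply Rmult_le_compat_l; lra).
    assert (a*r*(2*lam-a)*lam <= lam*lam) by lra.
    assert (a*r*(2*lam-a) <= lam) by nra.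
    nra. }
  assert (Hdtc2 : dt*(1 - gamma_i lam a r 2) <= 1 - lam*r).
  { apply div_le; [lra|].
    eapply Rle_trans; [exact Hdtc|apply Rmin_r]. }
  assert (Hdxa : dx*(lam+a) <= a^2) by (apply div_le; [lra|exact Hdxc]).
  assert (Hcase' : 2*a < lam \/ (lam < 2*a /\ 2*a - lam <= r*(a^2 - dx*(lam-a)))).
  { destruct Hcase as [?|[[? ?] Hc]]; [left; lra|right; split; [lra|]].
    assert (HD : 0 < a^2 - dx*(lam-a)).
    { assert (dx*(lam-a) < dx*(lam+a)) by (apply Rmult_lt_compat_l; lra). lra. }
    rewrite Rabs_left in Hc by lra.
    apply Rmult_le_compat_r with (r := a^2 - dx*(lam-a)) in Hc; [|lra].
    replace (- (lam - 2 * a) / (a ^ 2 - dx * (lam - a)) * (a ^ 2 - dx * (lam - a))) with (2*a - lam) in Hc by (field; lra).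
    lra. }
  destruct Hi as [-> | ->].
  - set (c1 := (lam - a^2*r)/(2*(lam+a))).
    set (k1 := (lam - a)^2/(4*lam)*r).
    assert (DG : derivable_pt_lim (Gamma_i M1 M2 lam a r 1) u (c1 * dM1 u - k1 * 1)).
    { change (Gamma_i M1 M2 lam a r 1) with (mult_real_fct c1 M1 - mult_real_fct k1 id)%F.
      apply derivable_pt_lim_minus; apply derivable_pt_lim_scal; [apply HdM1|apply derivable_pt_lim_id]. }
    rewrite Rmult_1_r in DG.
    pose proof (uniqueness_limite _ _ _ _ (HdGamma 1%nat u (or_introl eq_refl)) DG) as EG.
    destruct (dB_rel (B 1%nat 1%Z) (B 1%nat (-1)%Z) (B 1%nat 0%Z) (Gamma_i M1 M2 lam a r 1) M1
       _ _ _ _ _ (1 - dt/2) u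
       (HB 1%nat 1%Z u (or_introl eq_refl) (or_intror (or_intror eq_refl)))
       (HB 1%nat (-1)%Z u (or_introl eq_refl) (or_introl eq_refl))
       (HB 1%nat 0%Z u (or_introl eq_refl) (or_intror (or_introl eq_refl)))
       DG (HdM1 u)
       (fun v => HB_diff 1%nat v (or_introl eq_refl))
       (fun v => HB_sum 1%nat v (or_introl eq_refl))) as [E1 E2].
    pose proof (HB0 1%nat u (or_introl eq_refl)) as E3. cbn [Nat.eqb] in E3.
    rewrite EG in E3.
    pose proof (Hbeta_sum 1%nat (or_introl eq_refl)) as E4.
    pose proof (Hbeta_diff 1%nat (or_introl eq_refl)) as E5.
    assert (Hc1 : c1 * (2*(lam+a)) = lam - a^2*r) by (unfold c1; field; lra).
    assert (Hk1 : k1 * (4*lam) = (lam-a)^2*r) by (unfold k1; field; lra).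
    destruct (core1 lam a dx r dt m1 (dM1 u) (gamma_i lam a r 1) c1 k1
      (dB 1%nat 1%Z u) (dB 1%nat (-1)%Z u) (dB 1%nat 0%Z u) (beta 1%nat 1%Z) (beta 1%nat (-1)%Z) (beta 1%nat 0%Z)
      Hlam Hapos Hal' Hdx Hr Hdtr Hrl Hdxa G1 Hc1 Hk1 Hdtc1 Hrm1 Hm1 Hm1u E1 E2 E3 E4 E5 Hbeta10)
      as [S1 [S2 [S3 [S4 [S5 S6]]]]].
    unfold lambda_i; cbn [Nat.eqb].
    repeat split; try lra.
    intros l [ -> | [ -> | -> ] ]; lra.
  - set (c2 := (lam - a^2*r)/(2*(lam-a))).
    set (k2 := (lam + a)^2/(4*lam)*r).
    assert (DG : derivable_pt_lim (Gamma_i M1 M2 lam a r 2) u (- c2 * dM2 u + k2 * 1)).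
    { change (Gamma_i M1 M2 lam a r 2) with (mult_real_fct (- c2) M2 + mult_real_fct k2 id)%F.
      apply derivable_pt_lim_plus; apply derivable_pt_lim_scal; [apply HdM2|apply derivable_pt_lim_id]. }
    rewrite Rmult_1_r in DG.
    pose proof (uniqueness_limite _ _ _ _ (HdGamma 2%nat u (or_intror eq_refl)) DG) as EG.
    destruct (dB_rel (B 2%nat 1%Z) (B 2%nat (-1)%Z) (B 2%nat 0%Z) (Gamma_i M1 M2 lam a r 2) M2
       _ _ _ _ _ (1 - dt/2) u
       (HB 2%nat 1%Z u (or_intror eq_refl) (or_intror (or_intror eq_refl)))
       (HB 2%nat (-1)%Z u (or_intror eq_refl) (or_introl eq_refl))
       (HB 2%nat 0%Z u (or_intror eq_refl) (or_intror (or_introl eq_refl)))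
       DG (HdM2 u)
       (fun v => HB_diff 2%nat v (or_intror eq_refl))
       (fun v => HB_sum 2%nat v (or_intror eq_refl))) as [E1 E2].
    pose proof (HB0 2%nat u (or_intror eq_refl)) as E3. cbn [Nat.eqb] in E3.
    rewrite EG in E3.
    pose proof (Hbeta_sum 2%nat (or_intror eq_refl)) as E4.
    pose proof (Hbeta_diff 2%nat (or_intror eq_refl)) as E5.
    assert (Hc2 : c2 * (2*(lam-a)) = lam - a^2*r) by (unfold c2; field; lra).
    assert (Hk2 : k2 * (4*lam) = (lam+a)^2*r) by (unfold k2; field; lra).
    destruct (core2 lam a dx r dt m2 (dM2 u) (gamma_i lam a r 2) c2 k2
      (dB 2%nat 1%Z u) (dB 2%nat (-1)%Z u) (dB 2%nat 0%Z u) (beta 2%nat 1%Z) (beta 2%nat (-1)%Z) (beta 2%nat 0%Z)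
      Hlam Hapos Hal' Hdx Hr Hdtr Hrl Hdxa Hcase' G2 Hc2 Hk2 Hdtc2 Hrm2 Hm2 Hm2u HdM2le E1 E2 E3 E4 E5 Hbeta20)
      as [S1 [S2 [S3 [S4 [S5 S6]]]]].
    unfold lambda_i; cbn [Nat.eqb].
    repeat split; try lra.
    intros l [ -> | [ -> | -> ] ]; lra.
Qed.
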